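(* Let $V$ be a reflexive Banach space, $F: V\to\mathbb{R}$ Fréchet differentiable and convex, $G\in\Gamma_0(V)$, $E=F+G$. For $1\le k\le N$ let $V_k$ be reflexive Banach spaces, $R_k^*: V_k\to V$ bounded linear with $V=\sum_k R_k^*V_k$ and surjective adjoints, and $d_k, G_k: V_k\times V\to\overline{\mathbb{R}}$ proper, convex, lower semicontinuous in the first argument. Assume: (i) (stable decomposition) there is $q>1$ such that for every bounded convex $K\subseteq V$ there is $C_{0,K}>0$ such that for all $u,v\in K\cap\operatorname{dom}G$ there exist $w_k\in V_k$ with $u-v=\sum_{k=1}^N R_k^*w_k$, $\sum_{k=1}^N d_k(w_k,v)\le \frac{C_{0,K}^q}{q}\|u-v\|^q$ and $\sum_{k=1}^N G_k(w_k,v)\le G(u)+(N-1)G(v)$; (ii) (strengthened convexity) there is $\tau_0\in(0,1]$ such that for all $v\in V$, $w_k\in V_k$, $\tau\in(0,\tau_0]$: $(1-\tau N)E(v)+\tau\sum_{k=1}^N E(v+R_k^*w_k)\ge E(v+\tau\sum_{k=1}^N R_k^*w_k)$; (iii) (local stability) there is $\omega_0>0$ such that for all $v\in\operatorname{dom}G$, $w_k\in V_k$, $1\le k\le N$: $D_F(v+R_k^*w_k,v)\le\omega_0 d_k(w_k,v)$ and $G(v+R_k^*w_k)\le G_k(w_k,v)$. Let $\tau\in(0,\tau_0]$, $\omega\ge\omega_0$. Then for every bounded convex $K\subseteq V$, $$D_F(u,v)+G(u)\le M_{\tau,\omega}(u,v)\le\frac{\omega C_{0,K'}^q}{q\tau^{q-1}}\|u-v\|^q+\tau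 G\Big(\frac1\tau u-\Big(\frac1\tau-1\Big)v\Big)+(1-\tau)G(v),\quad u,v\in K\cap\operatorname{dom}G,$$ where $K'=\{\frac1\tau u-(\frac1\tau-1)v : u,v\in K\}$ and $M_{\tau,\omega}(u,v)=\tau\inf\{\sum_{k=1}^N(\omega d_k+G_k)(w_k,v): u-v=\tau\sum_{k=1}^N R_k^*w_k,\ w_k\in V_k\}+(1-\tau N)G(v)$.
   Context: $\Gamma_0(V)$ is the set of proper, convex, lower semicontinuous functionals $V\to\mathbb{R}\cup\{+\infty\}$; $\operatorname{dom} G=\{u: G(u)<\infty\}$. Bregman distance: $D_F(u,v)=F(u)-F(v)-\langle F'(v),u-v\rangle$. *)

(* Defs.v *)
From HB Require Import structures.
From mathcomp Require Import all_boot all_order all_algebra.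
From mathcomp Require Import all_classical all_reals all_analysis.
Set Implicit Arguments. Unset Strict Implicit. Unset Printing Implicit Defensive.
Import Order.TTheory GRing.Theory Num.Theory.
Import numFieldNormedType.Exports.
Local Open Scope classical_set_scope.
Local Open Scope ring_scope.

Section Defs.
Variable R : realType.

Definition cvx_set (V : lmodType R) (K : set V) : Prop :=
  forall x y (t : R), K x -> K y -> 0 <= t <= 1 -> K (t *: x + (1 - t) *: y).

Definition cvx_fun (V : lmodType R) (f : V -> R) : Prop :=
  forall x y (t : R), 0 <= t <= 1 ->
    f (t *: x + (1 - t) *: y) <= t * f x + (1 - t) * f y.

Definition cvx_efun (V : lmodType R) (f : V -> \bar R) : Prop :=
  forall x y (t : R), 0 <= t <= 1 ->
    (f (t *: x + (1 - t) *: y)%R <= t%:E * f x + (1 - t)%:E * f y)%E.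

Definition proper_efun (V : Type) (f : V -> \bar R) : Prop :=
  (exists x, (f x < +oo)%E) /\ (forall x, f x != -oo%E).

Definition Gamma0 (V : normedModType R) (f : V -> \bar R) : Prop :=
  [/\ proper_efun f, cvx_efun f & lower_semicontinuous f].

Definition dom (V : Type) (G : V -> \bar R) : set V := [set u | (G u < +oo)%E].

Definition cont_lin_functional (V : normedModType R) (f : V -> R) : Prop :=
  (forall (a : R) x y, f (a *: x + y) = a * f x + f y) /\ continuous f.

(* reflexivity: every bounded linear functional on the dual V' is evaluation
   at some point of V (the canonical embedding V -> V'' is onto). *)
Definition reflexive_space (V : normedModType R) : Prop :=
  forall Phi : (V -> R) -> R,
    (forall (a : R) f g, cont_lin_functional f -> cont_lin_functional g ->
       Phi (fun x => a * f x + g x) = a * Phi f + Phi g) ->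
    (exists C : R, forall f (M : R), cont_lin_functional f -> 0 <= M ->
       (forall x, `|f x| <= M * `|x|) -> `|Phi f| <= C * M) ->
    exists x : V, forall f, cont_lin_functional f -> Phi f = f x.

(* the adjoint of a bounded linear T : W -> V is surjective onto W' *)
Definition adjoint_surjective (W V : normedModType R) (T : W -> V) : Prop :=
  forall g : W -> R, cont_lin_functional g ->
    exists f : V -> R, cont_lin_functional f /\ forall w, f (T w) = g w.

Definition bregman (V : normedModType R) (F : V -> R) (u v : V) : R :=
  F u - F v - 'd F v (u - v).

Definition Mto (V : normedModType R) (N : nat) (Vk : 'I_N -> normedModType R)
  (Rs : forall k, Vk k -> V) (d Gk : forall k, Vk k -> V -> \bar R)
  (G : V -> \bar R) (tau omega : R) (u v : V) : \bar R :=
  (tau%:E * ereal_inf [set s | exists w : forall k, Vk k,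
       (u - v = tau *: \sum_(k < N) Rs k (w k))%R /\
       s = \sum_(k < N) (omega%:E * d k (w k) v + Gk k (w k) v)]
   + (1 - tau * N%:R)%:E * G v)%E.

End Defs.

(* Main.v *)
Require Import Defs.
From HB Require Import structures.
From mathcomp Require Import all_boot all_order all_algebra.
From mathcomp Require Import all_classical all_reals all_analysis.
From mathcomp Require Import ring lra.
Import Order.TTheory GRing.Theory Num.Theory.
Import numFieldNormedType.Exports.
Local Open Scope classical_set_scope.
Local Open Scope ring_scope.

Lemma bregman_ge0 (R : realType) (V : normedModType R) (F : V -> R) u v :
  cvx_fun F -> differentiable F v -> 0 <= bregman F u v.
Proof.
move=> cF dF; rewrite /bregman -deriveE //.
have := @diff_derivable _ _ _ _ _ (u - v) dF; rewrite /derivable => cvfx.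
set g := (fun h : R => _) in cvfx.
have Hr : g @ 0^'+ --> lim (g @ 0^').
  move=> A /cvfx /nbhs_ballP [_ /posnumP[e] xe_A].
  by exists e%:num => //= y xe_y /gt_eqF/negbT/xe_A; exact.
rewrite /derive subr_ge0.
apply: (cvgr_to_le Hr).
exists 1 => //= t; rewrite /ball /= sub0r normrN => t1 t0.
have t1' : t <= 1 by apply: ltW; rewrite -(ger0_norm (ltW t0)).
change (g t <= F u - F v).
rewrite /g /= ler_pdivrMl //.
have -> : t *: (u - v) + v = t *: u + (1 - t) *: v.
  by rewrite scalerBr scalerBl scale1r -addrA [- _ + v]addrC.
have := cF u v t; rewrite t1' ltW //= => /(_ isT) H.
rewrite mulrBr; move: H; set a := F _; lra.
Qed.

Lemma Kp_bounded (R : realType) (V : normedModType R) (K : set V) (a b : R) :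
  bounded_set K ->
  bounded_set [set x | exists u' v', K u' /\ K v' /\ x = a *: u' - b *: v'].
Proof.
case=> M0 [M0r HM].
have c0 : 0 <= `|a| + `|b| by rewrite addr_ge0.
exists ((`|a| + `|b|) * (`|M0| + 1)); split; first by rewrite realE mulr_ge0 ?addr_ge0.
move=> M HcM x [u' [v' [Ku [Kv ->]]]].
have H1 : M0 < `|M0| + 1 by have := ler_norm M0; lra.
have Hu := HM _ H1 u' Ku; have Hv := HM _ H1 v' Kv.
rewrite /= in Hu Hv.
apply: le_trans (ler_normB _ _) _; rewrite !normrZ.
apply: (le_trans _ (ltW HcM)); rewrite mulrDl.
by apply: lerD; apply: ler_wpM2l.
Qed.

Lemma Kp_cvx (R : realType) (V : normedModType R) (K : set V) (a b : R) :
  cvx_set K ->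
  cvx_set [set x | exists u' v', K u' /\ K v' /\ x = a *: u' - b *: v'].
Proof.
move=> cK x y t [u1 [v1 [Ku1 [Kv1 ->]]]] [u2 [v2 [Ku2 [Kv2 ->]]]] t01.
exists (t *: u1 + (1 - t) *: u2), (t *: v1 + (1 - t) *: v2); split; first exact: cK.
split; first exact: cK.
rewrite !scalerBr !scalerDr !scalerA ![t * _]mulrC ![(1 - t) * _]mulrC -!scalerA.
by rewrite addrACA opprD.
Qed.

Theorem lemma4p6 (R : realType) (V : completeNormedModType R)
  (F : V -> R) (G : V -> \bar R)
  (N : nat) (Vk : 'I_N -> completeNormedModType R)
  (Rs : forall k, {linear Vk k -> V})
  (d Gk : forall k, Vk k -> V -> \bar R)
  (q : R) (C0 : set V -> R) (tau0 omega0 : R) :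
  reflexive_space V ->
  (forall x, differentiable F x) -> cvx_fun F ->
  Gamma0 G ->
  (0 < N)%N ->
  (forall k, reflexive_space (Vk k)) ->
  (forall k, continuous (Rs k)) ->
  (forall v : V, exists w : forall k, Vk k, v = \sum_(k < N) Rs k (w k)) ->
  (forall k, adjoint_surjective (Rs k)) ->
  (forall k v, proper_efun (fun w => d k w v) /\ cvx_efun (fun w => d k w v) /\
               lower_semicontinuous (fun w => d k w v)) ->
  (forall k v, proper_efun (fun w => Gk k w v) /\ cvx_efun (fun w => Gk k w v) /\
               lower_semicontinuous (fun w => Gk k w v)) ->
  (* (i) stable decomposition *)
  1 < q ->
  (forall K : set V, bounded_set K -> cvx_set K ->
     0 < C0 K /\
     forall u v, K u -> K v -> dom G u -> dom G v ->
       exists w : forall k, Vk k,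
         u - v = \sum_(k < N) Rs k (w k) /\
         (\sum_(k < N) d k (w k) v <= ((C0 K `^ q) / q * `|u - v| `^ q)%R%:E)%E /\
         (\sum_(k < N) Gk k (w k) v <= G u + (N.-1)%:R%:E * G v)%E) ->
  (* (ii) strengthened convexity *)
  0 < tau0 <= 1 ->
  (forall (v : V) (w : forall k, Vk k) (tau : R), 0 < tau <= tau0 ->
     ((F (v + tau *: \sum_(k < N) Rs k (w k))%R)%:E
        + G (v + tau *: \sum_(k < N) Rs k (w k))%R
      <= (1 - tau * N%:R)%:E * ((F v)%:E + G v)
         + tau%:E * \sum_(k < N) ((F (v + Rs k (w k))%R)%:E + G (v + Rs k (w k))%R))%E) ->
  (* (iii) local stability *)
  0 < omega0 ->
  (forall v, dom G v -> forall k (w : Vk k),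
     ((bregman F (v + Rs k w)%R v)%:E <= omega0%:E * d k w v)%E /\
     (G (v + Rs k w)%R <= Gk k w v)%E) ->
  forall tau omega : R, 0 < tau <= tau0 -> omega0 <= omega ->
  forall K : set V, bounded_set K -> cvx_set K ->
  forall u v, K u -> K v -> dom G u -> dom G v ->
  let K' := [set x | exists u' v', K u' /\ K v' /\
                     x = tau^-1 *: u' - (tau^-1 - 1) *: v'] in
  ((bregman F u v)%:E + G u <= Mto Rs d Gk G tau omega u v)%E /\
  (Mto Rs d Gk G tau omega u v
     <= (omega * C0 K' `^ q / (q * tau `^ (q - 1)) * `|u - v| `^ q)%R%:E
        + tau%:E * G (tau^-1 *: u - (tau^-1 - 1) *: v)%R
        + (1 - tau)%:E * G v)%E.
Proof.
move=> reflV dF cF [[_ GnNy] cG lscG] N0 _ _ _ _ hd hGk q1 hC0 tau0b Hii om0 Hiii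
  tau omega taub omb K bK cK u v Ku Kv du dv K'.
have [taup taule] := andP taub.
have om0' : 0 < omega by apply: lt_le_trans omb.
have [gv Gv] : exists gv, G v = gv%:E.
  by move: dv (GnNy v); rewrite /dom /=; case: (G v) => [r| |] // _ _; exists r.
have [gu Gu] : exists gu, G u = gu%:E.
  by move: du (GnNy u); rewrite /dom /=; case: (G u) => [r| |] // _ _; exists r.
have dge0 : forall k w, (0 <= d k w v)%E.
  move=> k w; have [Hb _] := Hiii v dv k w.
  rewrite -(pmule_rge0 _ (_ : 0 < omega0%:E)%E) ?lte_fin //.
  apply: le_trans Hb; rewrite lee_fin; apply: bregman_ge0 => //.
set c := 1 - tau * N%:R.
have t0E : (0 <= tau%:E)%E by rewrite lee_fin ltW.
have claim : forall w : forall k, Vk k, u - v = tau *: \sum_(k < N) Rs k (w k) ->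
   (((bregman F u v + gu - c * gv) / tau)%:E <=
    \sum_(k < N) (omega%:E * d k (w k) v + Gk k (w k) v))%E.
  move=> w Huv.
  have := Hii v w tau taub.
  have -> : v + tau *: \sum_(k < N) Rs k (w k) = u by rewrite -Huv addrC subrK.
  rewrite Gu Gv => H.
  have Hk : forall k, ((F (v + Rs k (w k)))%:E + G (v + Rs k (w k))%R <=
     (F v + 'd F v (Rs k (w k)))%:E + (omega%:E * d k (w k) v + Gk k (w k) v))%E.
    move=> k; have [Hb HG] := Hiii v dv k (w k).
    have e : v + Rs k (w k) - v = Rs k (w k) by rewrite addrC addKr.
    move: Hb; rewrite /bregman e => Hb.
    have -> : F (v + Rs k (w k)) = (F v + 'd F v (Rs k (w k))) +
       (F (v + Rs k (w k)) - F v - 'd F v (Rs k (w k))) by ring.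
    rewrite EFinD -addeA; apply: leeD; first exact: le_refl.
    apply: leeD; last exact: HG.
    apply: le_trans Hb _; apply: lee_wpmul2r; first exact: dge0.
    by rewrite lee_fin.
  have Hs : (\sum_(k < N) ((F (v + Rs k (w k)))%:E + G (v + Rs k (w k))%R) <=
     \sum_(k < N) ((F v + 'd F v (Rs k (w k)))%:E + (omega%:E * d k (w k) v + Gk k (w k) v)))%E.
    by apply: lee_sum => k _; exact: Hk.
  rewrite [X in (_ <= X)%E]big_split /= sumEFin in Hs.
  set a := (\sum_(i < N) (F v + _))%R in Hs.
  set s := (\sum_(k < N) _)%E in Hs *.
  have ta : tau * a = tau * N%:R * F v + 'd F v (u - v).
    rewrite /a big_split /= sumr_const card_ord -linear_sum Huv linearZ /=.
    by rewrite mulrDr mulr_natr mulrnAr mulrnAl.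
  have H2 := le_trans H (leeD2l _ (lee_wpmul2l t0E Hs)).
  clearbody s; case: s H2 Hs => [r| |] H2 Hs.
  - rewrite -EFinD -!EFinM -EFinD lee_fin in H2.
    rewrite lee_fin ler_pdivrMr // /bregman.
    move: H2; rewrite [tau * (a + r)]mulrDr ta /c; lra.
  - by rewrite leey.
  - by move: H2; rewrite addeNy gt0_muleNy // addeNy leeNy_eq.
split.
  rewrite /Mto Gu Gv; set S := [set s | _].
  have L : (((bregman F u v + gu - c * gv) / tau)%:E <= ereal_inf S)%E.
    by apply: le_ereal_inf_tmp => s [w [Huv ->]]; exact: claim.
  apply: le_trans (leeD2r _ (lee_wpmul2l t0E L)).
  rewrite -EFinM -EFinM -EFinD -EFinD lee_fin mulrC divfK ?gt_eqF // /c; lra.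
set u' := tau^-1 *: u - (tau^-1 - 1) *: v.
case Gu' : (G u') => [r| |]; last first.
- by have := GnNy u'; rewrite Gu'.
- by rewrite Gv -EFinM gt0_muley ?lte_fin // addey // addye // leey.
have bK' : bounded_set K' := @Kp_bounded _ _ _ _ _ bK.
have cK' : cvx_set K' := @Kp_cvx _ _ _ _ _ cK.
have [C0p HC] := hC0 K' bK' cK'.
have K'u : K' u' by exists u, v.
have K'v : K' v.
  by exists v, v; do 2!split => //; rewrite scalerBl scale1r opprB addrCA subrr addr0.
have du' : dom G u' by rewrite /dom /= Gu' ltry.
have [w [Hsum [Hd HGk]]] := HC u' v K'u K'v du' dv.
have e1 : u' - v = tau^-1 *: (u - v).
  by rewrite /u' scalerBl scale1r scalerBr opprB [v - _]addrC addrA addrK.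
have Huv : u - v = tau *: \sum_(k < N) Rs k (w k).
  by rewrite -Hsum e1 scalerA mulfV ?gt_eqF // scale1r.
rewrite /Mto Gv; set S := [set s | _].
have Hinf : (ereal_inf S <= (omega * (C0 K' `^ q / q * `|u' - v| `^ q) +
                             (r + (N.-1)%:R * gv))%:E)%E.
  apply: ge_ereal_inf; eexists; first by exists w; split.
  rewrite big_split /= -ge0_sume_distrr; last by move=> k _; exact: dge0.
  rewrite EFinD; apply: leeD.
    by rewrite EFinM; apply: lee_wpmul2l => //; rewrite lee_fin ltW.
  by move: HGk; rewrite Gu' Gv.
apply: le_trans (leeD2r _ (lee_wpmul2l t0E Hinf)) _.
rewrite -!EFinM -!EFinD lee_fin.
have tle : 0 <= tau by exact: ltW.
rewrite e1 normrZ gtr0_norm ?invr_gt0 // powRM ?invr_ge0 //.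
have tq : tau `^ q = tau `^ (q - 1) * tau.
  rewrite -[X in _ = _ * X](powRr1 (ltW taup)) -powRD ?gt_eqF ?implybT // ?subrK //; lra.
have hinv : tau^-1 `^ q * tau `^ q = 1.
  by rewrite -powRM ?invr_ge0 // mulVf ?gt_eqF // powR1.
have tq0 : tau `^ q != 0 by rewrite gt_eqF // powR_gt0.
have hA : tau^-1 `^ q = (tau `^ q)^-1.
  by rewrite -[LHS]mulr1 -(mulfV tq0) mulrA hinv mul1r.
have P0 : 0 < tau `^ (q - 1) by rewrite powR_gt0.
have q0 : 0 < q by lra.
rewrite hA tq -subn1 natrB // le_eqVlt; apply/orP; left; apply/eqP.
field; rewrite ?gt_eqF //.
Qed.
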